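(* Let $n\ge 1$ and $1\le k\le d$ be integers, set $p=k/d$, and let $\mathbf{x}_1,\dots,\mathbf{x}_n\in\mathbb{R}^d$ with $\mathbf{x}_i=(x_{i1},\dots,x_{id})$. Each node $i$ independently chooses a uniformly random subset $S_i\subseteq\{1,\dots,d\}$ of size $k$, and sets $h_{ij}=x_{ij}$ if $j\in S_i$ and $h_{ij}=0$ otherwise. Let $M_j=|\{i:j\in S_i\}|$. Let $T:\{1,\dots,n\}\to\mathbb{R}\setminus\{0\}$ be such that $$\bar\beta=\Big(\sum_{m=1}^{n}\frac{k}{d\,T(m)}\binom{n-1}{m-1}p^{m-1}(1-p)^{n-m}\Big)^{-1}$$ is well defined. Define $\hat{\mathbf{x}}=(\hat x_1,\dots,\hat x_d)$ by $\hat{x}_j=\frac{1}{n}\frac{\bar\beta}{T(M_j)}\sum_{i=1}^n h_{ij}$ if $M_j\ge1$ and $\hat x_j=0$ if $M_j=0$, and let $\bar{\mathbf{x}}=\frac1n\sum_{i=1}^n\mathbf{x}_i$. Then $$\mathbb{E}\big[\|\hat{\mathbf{x}}-\bar{\mathbf{x}}\|_2^2\big]=\frac{1}{n^2}\Big(\frac{d}{k}-1\Big)R_1+\frac{1}{n^2}\big(c_1R_1-c_2R_2\big),$$ where $R_1=\sum_{i=1}^n\|\mathbf{x}_i\|_2^2$, $R_2=2\sum_{i=1}^n\sum_{l=i+1}^n\langle\mathbf{x}_i,\mathbf{x}_l\rangle$, $$c_1=\bar\beta^2\sum_{m=1}^{n}\frac{k}{d\,T(m)^2}\binom{n-1}{m-1}p^{m-1}(1-p)^{n-m}-\frac{d}{k},\qquad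 c_2=1-\bar\beta^2\sum_{m=2}^{n}\frac{k^2}{d^2T(m)^2}\binom{n-2}{m-2}p^{m-2}(1-p)^{n-m},$$ and the expectation is over the random subsets $S_1,\dots,S_n$.
   Context: This is the mean squared error of the Rand-$k$-Spatial family of estimators of $\bar{\mathbf{x}}$ from Rand-$k$ sparsified vectors; the choice $T\equiv1$ recovers the standard Rand-$k$ estimator $\frac{1}{n}\frac{d}{k}\sum_i\mathbf{h}_i$. *)

(* Defs.v *)
From mathcomp Require Import all_boot all_order all_algebra.
Set Implicit Arguments. Unset Strict Implicit. Unset Printing Implicit Defensive.
Import Order.TTheory GRing.Theory Num.Theory.
Local Open Scope ring_scope.

Section RandKSpatial.
Variables (R : realFieldType) (n d k : nat).

Definition config := {ffun 'I_n -> {set 'I_d}}.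

Definition subset_prob (A : {set 'I_d}) : R :=
  if #|A| == k then ('C(d, k)%:R)^-1 else 0.

Definition config_prob (S : config) : R := \prod_(i < n) subset_prob (S i).

Definition expect (f : config -> R) : R :=
  \sum_(S : config) config_prob S * f S.

Definition pk : R := k%:R / d%:R.

Definition Mcount (S : config) (j : 'I_d) : nat := #|[set i | j \in S i]|.

Definition hval (x : 'I_n -> 'I_d -> R) (S : config) (i : 'I_n) (j : 'I_d) : R :=
  if j \in S i then x i j else 0.

Definition betabar (T : nat -> R) : R :=
  (\sum_(1 <= m < n.+1)
     k%:R / (d%:R * T m) * 'C(n.-1, m.-1)%:R * pk ^+ m.-1 * (1 - pk) ^+ (n - m))^-1.

Definition xhat (T : nat -> R) (x : 'I_n -> 'I_d -> R) (S : config) (j : 'I_d) : R :=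
  if (1 <= Mcount S j)%N then
    n%:R^-1 * (betabar T / T (Mcount S j)) * \sum_(i < n) hval x S i j
  else 0.

Definition xbar (x : 'I_n -> 'I_d -> R) (j : 'I_d) : R := n%:R^-1 * \sum_(i < n) x i j.

Definition sqerr (T : nat -> R) (x : 'I_n -> 'I_d -> R) (S : config) : R :=
  \sum_(j < d) (xhat T x S j - xbar x j) ^+ 2.

Definition dotp (u v : 'I_d -> R) : R := \sum_(j < d) u j * v j.

Definition R1 (x : 'I_n -> 'I_d -> R) : R := \sum_(i < n) dotp (x i) (x i).

Definition R2 (x : 'I_n -> 'I_d -> R) : R :=
  2 * \sum_(i < n) \sum_(l < n | (i < l)%N) dotp (x i) (x l).

Definition c1 (T : nat -> R) : R :=
  betabar T ^+ 2 * \sum_(1 <= m < n.+1)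
     k%:R / (d%:R * T m ^+ 2) * 'C(n.-1, m.-1)%:R * pk ^+ m.-1 * (1 - pk) ^+ (n - m)
  - d%:R / k%:R.

Definition c2 (T : nat -> R) : R :=
  1 - betabar T ^+ 2 * \sum_(2 <= m < n.+1)
     (k%:R ^+ 2) / (d%:R ^+ 2 * T m ^+ 2) * 'C(n - 2, m - 2)%:R
       * pk ^+ (m - 2) * (1 - pk) ^+ (n - m).

End RandKSpatial.

(* Main.v *)
Require Import Defs.
From mathcomp Require Import all_boot all_order all_algebra ring.
Set Implicit Arguments. Unset Strict Implicit. Unset Printing Implicit Defensive.
Import Order.TTheory GRing.Theory Num.Theory.
Lemma card_super (T : finType) (C : {set T}) m :
  #|[set B : {set T} | C \subset B & #|B| == m + #|C|]| = 'C(#|~: C|, m).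
Proof.
rewrite -cards_draws.
have -> : [set B : {set T} | B \subset ~: C & #|B| == m] =
   (fun B => B :\: C) @: [set B : {set T} | C \subset B & #|B| == m + #|C|].
  apply/setP => B'; rewrite inE; apply/andP/imsetP.
    case=> sub /eqP cB.
    have dis : [disjoint C & B'] by rewrite disjoint_sym disjoints_subset.
    exists (C :|: B').
      by rewrite inE subsetUl /= cardsU (disjoint_setI0 dis) cards0 subn0 addnC cB.
    by rewrite setDUl setDv set0U; apply/esym/setDidPl; rewrite disjoint_sym.
  case=> B; rewrite inE => /andP[sCB /eqP cB] ->; split.
    by apply/subsetP => y; rewrite !inE => /andP[].
  by rewrite cardsD (setIidPr sCB) cB addnK.
rewrite card_in_imset // => B1 B2; rewrite !inE => /andP[s1 _] /andP[s2 _] e.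
have K (B : {set T}) : C \subset B -> C :|: (B :\: C) = B.
  move=> sCB; apply/setP => y; rewrite !inE.
  by case: (boolP (y \in C)) => //= yC; rewrite (subsetP sCB).
by rewrite -(K _ s1) -(K _ s2) e.
Qed.
Lemma count_super (T : finType) (C : {set T}) m :
 #|[set B : {set T} | C \subset B & #|B| == m]| =
   if (#|C| <= m)%N then 'C(#|~: C|, m - #|C|) else 0%N.
Proof.
case: leqP => h; first by rewrite -card_super subnK.
apply/eqP; rewrite cards_eq0; apply/eqP/setP => B; rewrite !inE.
apply/negbTE/negP => /andP[s /eqP c].
by have := subset_leq_card s; rewrite c leqNgt h.
Qed.

Local Open Scope ring_scope.
Lemma sum_super (R : realFieldType) n (C : {set 'I_n}) (g : nat -> R) :
 \sum_(B : {set 'I_n}) (if C \subset B then g #|B| else 0) =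
 \sum_(0 <= m < n.+1) (if (#|C| <= m)%N then 'C(n - #|C|, m - #|C|)%:R * g m else 0).
Proof.
transitivity (\sum_(B : {set 'I_n}) \sum_(0 <= m < n.+1)
   (if (C \subset B) && (m == #|B|) then g m else 0)).
  apply: eq_bigr => B _; case: (C \subset B) => /=; last by rewrite big1.
  rewrite -big_mkcond big_nat1_eq /=.
  by have := max_card (mem B); rewrite card_ord ltnS => ->.
rewrite exchange_big; apply: eq_big_nat => m _.
rewrite -big_mkcond /=.
rewrite (eq_bigl (fun B => B \in [set B : {set 'I_n} | C \subset B & #|B| == m])); last first.
  by move=> B; rewrite inE eq_sym.
rewrite sumr_const count_super -mulr_natl [#|~: C|]cardsCs setCK card_ord.
by case: leqP => _; rewrite ?mulr1 ?mulr_natl ?mulr0n.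
Qed.

Section Main.
Variables (R : realFieldType) (n d k : nat).
Hypotheses (hk : (1 <= k)%N) (hkd : (k <= d)%N).

Let q := @subset_prob R d k.
Let p := pk R d k.

Lemma binR_neq0 : ('C(d, k)%:R : R) != 0.
Proof. by rewrite pnatr_eq0 -lt0n bin_gt0. Qed.

Lemma d_neq0 : (d%:R : R) != 0.
Proof. by rewrite pnatr_eq0 -lt0n (leq_trans hk hkd). Qed.

Lemma sum_q : \sum_(A : {set 'I_d}) q A = 1.
Proof.
rewrite /q /subset_prob -big_mkcond /=.
rewrite (eq_bigl (fun A => A \in [set A : {set 'I_d} | #|A| == k])); last first.
  by move=> A; rewrite inE.
by rewrite sumr_const card_draws card_ord -[_ *+ 'C(d, k)]mulr_natr mulVf // binR_neq0.
Qed.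

Lemma sum_q_in (j : 'I_d) : \sum_(A : {set 'I_d} | j \in A) q A = p.
Proof.
rewrite /q /subset_prob big_mkcond /=.
rewrite (eq_bigr (fun A => if A \in [set A : {set 'I_d} | [set j] \subset A & #|A| == k]
   then ('C(d, k)%:R)^-1 else 0)); last first.
  by move=> A _; rewrite inE sub1set; case: (j \in A); case: (#|A| == k).
rewrite -big_mkcond /= sumr_const count_super cards1 hk.
rewrite [#|~: _|]cardsCs setCK card_ord cards1.
rewrite /p /pk -mulr_natr.
have := mul_bin_diag d k.-1; rewrite prednK // => /(congr1 (fun m => m%:R : R)).
rewrite !natrM !subn1 => e.
rewrite mul1r -[_ *+ _]mulr_natr; apply: (mulfI d_neq0).
by rewrite mulrCA e [RHS]mulrC mulfVK ?d_neq0 // mulrCA mulVf ?binR_neq0 ?mulr1.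
Qed.

Lemma sum_q_notin (j : 'I_d) : \sum_(A : {set 'I_d} | j \notin A) q A = 1 - p.
Proof.
have := sum_q; rewrite (bigID (fun A : {set _} => j \in A)) /= sum_q_in => <-.
by rewrite addrC addrK.
Qed.

Definition Bset (S : config n d) (j : 'I_d) : {set 'I_n} := [set i | j \in S i].
Definition wB (B : {set 'I_n}) : R := p ^+ #|B| * (1 - p) ^+ (n - #|B|).

Lemma expect_pattern (j : 'I_d) (F : {set 'I_n} -> R) :
  expect k (fun S => F (Bset S j)) = \sum_(B : {set 'I_n}) wB B * F B.
Proof.
rewrite /expect (partition_big (fun S => Bset S j) xpredT) //=.
apply: eq_bigr => B _.
rewrite (eq_bigr (fun S => config_prob R k S * F B)); last by move=> S /eqP ->.
rewrite -big_distrl /=; congr (_ * _).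
rewrite /config_prob.
transitivity (\prod_(i < n) \sum_(A : {set 'I_d} | (j \in A) == (i \in B)) q A).
  rewrite bigA_distr_big_dep; apply: eq_bigl => S.
  apply/eqP/familyP => [<- i | H]; first by rewrite unfold_in /Bset inE.
  by apply/setP => i; rewrite !inE; apply/eqP; have := H i; rewrite unfold_in.
rewrite (eq_bigr (fun i => if i \in B then p else 1 - p)); last first.
  move=> i _; case: (i \in B).
    by rewrite -(sum_q_in j); apply: eq_bigl => A; rewrite eqb_id.
  by rewrite -(sum_q_notin j); apply: eq_bigl => A; rewrite eqbF_neg.
rewrite (bigID (fun i => i \in B)) /=.
rewrite (eq_bigr (fun _ => p)); last by move=> i ->.
rewrite [X in _ * X](eq_bigr (fun _ => 1 - p)); last by move=> i H; rewrite (negbTE H).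
rewrite prodr_const.
rewrite (eq_bigl (fun i => i \in ~: B)); last by move=> i; rewrite inE.
by rewrite prodr_const /wB [#|~: B|]cardsCs setCK card_ord.
Qed.

Lemma sum_wB_super (C : {set 'I_n}) (g : nat -> R) :
  \sum_(B : {set 'I_n}) wB B * (if C \subset B then g #|B| else 0) =
  \sum_(0 <= m < n.+1) (if (#|C| <= m)%N then
      'C(n - #|C|, m - #|C|)%:R * (p ^+ m * (1 - p) ^+ (n - m) * g m) else 0).
Proof.
rewrite -(sum_super C (fun m => p ^+ m * (1 - p) ^+ (n - m) * g m)).
apply: eq_bigr => B _; rewrite /wB; case: (C \subset B); by rewrite ?mulr0 ?mulrA.
Qed.

Lemma sum_wB_1 (i : 'I_n) (g : nat -> R) :
  \sum_(B : {set 'I_n}) wB B * (if i \in B then g #|B| else 0) =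
  \sum_(1 <= m < n.+1) 'C(n - 1, m - 1)%:R * (p ^+ m * (1 - p) ^+ (n - m) * g m).
Proof.
rewrite (eq_bigr (fun B => wB B * (if [set i] \subset B then g #|B| else 0))); last first.
  by move=> B _; rewrite sub1set.
rewrite sum_wB_super cards1 big_ltn // /=.
by rewrite add0r; apply: eq_big_nat => m /andP[h _]; rewrite h.
Qed.

Lemma sum_wB_2 (i l : 'I_n) (g : nat -> R) : i != l ->
  \sum_(B : {set 'I_n}) wB B * (if (i \in B) && (l \in B) then g #|B| else 0) =
  \sum_(2 <= m < n.+1) 'C(n - 2, m - 2)%:R * (p ^+ m * (1 - p) ^+ (n - m) * g m).
Proof.
move=> il.
rewrite (eq_bigr (fun B => wB B * (if [set i; l] \subset B then g #|B| else 0))); last first.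
  by move=> B _; rewrite subUset !sub1set.
rewrite sum_wB_super cards2 il /=.
case: n i l il => [[]//|n'] i l il.
rewrite (@big_cat_nat _ _ _ 2) //= big1_seq ?add0r; last first.
  by move=> m; rewrite mem_index_iota; case: m => [|[]].
by apply: eq_big_nat => m /andP[h _]; rewrite h.
Qed.

Lemma sum_config_prob : \sum_(S : config n d) config_prob R k S = 1.
Proof.
rewrite /config_prob -(bigA_distr_bigA (fun (i : 'I_n) (A : {set 'I_d}) => q A)) /=.
by rewrite big1 // => i _; exact: sum_q.
Qed.

Lemma sum_wB : \sum_(B : {set 'I_n}) wB B = 1.
Proof.
pose j0 : 'I_d := Ordinal (leq_trans hk hkd).
rewrite -[RHS]sum_config_prob.
transitivity (\sum_(B : {set 'I_n}) wB B * 1); first by apply: eq_bigr => B _; rewrite mulr1.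
rewrite -(expect_pattern j0 (fun _ => 1)) /expect; apply: eq_bigr => S _; by rewrite mulr1.
Qed.

Lemma sq_sum (I : finType) (a : I -> R) :
  (\sum_i a i) ^+ 2 = \sum_i \sum_l a i * a l.
Proof. by rewrite expr2 mulr_suml; apply: eq_bigr => i _; rewrite mulr_sumr. Qed.

Lemma sq_sum2 (a : 'I_n -> R) :
  (\sum_i a i) ^+ 2 = \sum_i a i * a i + \sum_i \sum_(l | l != i) a i * a l.
Proof.
by rewrite sq_sum -big_split; apply: eq_bigr => i _; rewrite (bigD1 i).
Qed.

Lemma pair_sum (f : 'I_n -> 'I_n -> R) : (forall i l, f i l = f l i) ->
  \sum_(i < n) \sum_(l < n | l != i) f i l = 2 * \sum_(i < n) \sum_(l < n | (i < l)%N) f i l.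
Proof.
move=> H.
transitivity (\sum_(i < n) \sum_(l < n | (i < l)%N) f i l + \sum_(i < n) \sum_(l < n | (l < i)%N) f i l).
  rewrite -big_split; apply: eq_bigr => i _.
  rewrite (bigID (fun l : 'I_n => (i < l)%N)) /=; congr (_ + _); apply: eq_bigl => l.
    by rewrite -(inj_eq val_inj) /=; case: ltngtP.
  by rewrite -(inj_eq val_inj) /=; case: ltngtP.
suff -> : \sum_(i < n) \sum_(l < n | (l < i)%N) f i l = \sum_(i < n) \sum_(l < n | (i < l)%N) f i l.
  by rewrite mulr2n mulrDl mul1r.
transitivity (\sum_(i < n) \sum_(l < n) (if (l < i)%N then f i l else 0)).
  by apply: eq_bigr => i _; rewrite big_mkcond.
rewrite exchange_big /=; apply: eq_bigr => a _.
rewrite [RHS]big_mkcond; change (\sum_(i < n) (if (a < i)%N then f i a else 0) = \sum_(i < n) (if (a < i)%N then f a i else 0)). by apply: eq_bigr => b _; rewrite H.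
Qed.

Variables (T : nat -> R) (x : 'I_n -> 'I_d -> R).
Hypothesis hbeta : \sum_(1 <= m < n.+1)
        k%:R / (d%:R * T m) * 'C(n.-1, m.-1)%:R
          * (pk R d k) ^+ m.-1 * (1 - pk R d k) ^+ (n - m) != 0.

Let beta := betabar n d k T.
Let a1 := \sum_(1 <= m < n.+1) 'C(n - 1, m - 1)%:R * (p ^+ m * (1 - p) ^+ (n - m) * (T m)^-1).
Let A1 := \sum_(1 <= m < n.+1) 'C(n - 1, m - 1)%:R * (p ^+ m * (1 - p) ^+ (n - m) * (T m ^+ 2)^-1).
Let B2 := \sum_(2 <= m < n.+1) 'C(n - 2, m - 2)%:R * (p ^+ m * (1 - p) ^+ (n - m) * (T m ^+ 2)^-1).

Lemma a1E : \sum_(1 <= m < n.+1)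
        k%:R / (d%:R * T m) * 'C(n.-1, m.-1)%:R
          * (pk R d k) ^+ m.-1 * (1 - pk R d k) ^+ (n - m) = a1.
Proof.
apply: eq_big_nat => m /andP[h _]; rewrite !subn1.
case: m h => // m _ /=; rewrite exprS /p /pk invfM; ring.
Qed.

Lemma beta_a1 : beta * a1 = 1.
Proof. by rewrite /beta /betabar a1E mulVf // -a1E. Qed.

Lemma c1E : c1 n d k T = beta ^+ 2 * A1 - d%:R / k%:R.
Proof.
rewrite /c1 -/beta; congr (_ * _ - _); apply: eq_big_nat => m /andP[h _]; rewrite !subn1.
case: m h => // m _ /=; rewrite /p /pk !exprS !invfM; ring.
Qed.

Lemma c2E : c2 n d k T = 1 - beta ^+ 2 * B2.
Proof.
rewrite /c2 -/beta; congr (_ - _ * _); apply: eq_big_nat => m /andP[h _].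
case: m h => // [[]] // m _; rewrite !subSS !subn0 !exprS /p /pk !invfM; rewrite ?expr0 ?invr1; ring.
Qed.

Section PerJ.
Variable j : 'I_d.
Let y i := x i j.

Definition G (B : {set 'I_n}) : R :=
  n%:R^-1 * (beta / T #|B|) * \sum_(i < n) (if i \in B then y i else 0).

Lemma xhatE S : xhat k T x S j = G (Bset S j).
Proof.
rewrite /xhat /Mcount /G /Bset; case: leqP => h.
  move: h; rewrite leqn0 => /eqP /cards0_eq ->.
  by rewrite big1 ?mulr0 // => i _; rewrite in_set0.
by congr (_ * _); apply: eq_bigr => i _; rewrite /hval inE.
Qed.

Lemma M1 : \sum_(B : {set 'I_n}) wB B * G B = xbar x j.
Proof.
transitivity (\sum_(B : {set 'I_n}) \sum_(i < n)
   n%:R^-1 * beta * (y i * (wB B * (if i \in B then (T #|B|)^-1 else 0)))).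
  apply: eq_bigr => B _; rewrite /G !mulr_sumr; apply: eq_bigr => i _.
  by case: (i \in B); ring.
rewrite exchange_big /= /xbar mulr_sumr; apply: eq_bigr => i _.
rewrite -mulr_sumr -mulr_sumr (sum_wB_1 i (fun m => (T m)^-1)) -/a1.
transitivity (n%:R^-1 * y i * (beta * a1)); first ring.
by rewrite beta_a1 mulr1.
Qed.

Let P1 := \sum_i y i * y i.
Let P2 := \sum_i \sum_(l | l != i) y i * y l.

Lemma M2 : \sum_(B : {set 'I_n}) wB B * G B ^+ 2 =
   (n%:R ^+ 2)^-1 * beta ^+ 2 * (A1 * P1 + B2 * P2).
Proof.
transitivity (\sum_(B : {set 'I_n}) \sum_(i < n) \sum_(l < n)
   (n%:R ^+ 2)^-1 * beta ^+ 2 * (y i * y l *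
     (wB B * (if (i \in B) && (l \in B) then (T #|B| ^+ 2)^-1 else 0)))).
  apply: eq_bigr => B _; rewrite /G !exprMn !exprVn sq_sum !mulr_sumr.
  apply: eq_bigr => i _; rewrite !mulr_sumr; apply: eq_bigr => l _.
  by case: (i \in B); case: (l \in B); rewrite /=; ring.
rewrite exchange_big /=.
transitivity (\sum_(i < n) ((n%:R ^+ 2)^-1 * beta ^+ 2 * (A1 * (y i * y i)) +
   \sum_(l < n | l != i) (n%:R ^+ 2)^-1 * beta ^+ 2 * (B2 * (y i * y l)))); last first.
  rewrite /P1 /P2 big_split /=. under [X in _ + X = _]eq_bigr do rewrite -(mulr_sumr _ _ _ ((n%:R ^+ 2)^-1 * beta ^+ 2)) -(mulr_sumr _ _ _ B2). rewrite -!mulr_sumr; ring.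
apply: eq_bigr => i _; rewrite exchange_big /= (bigD1 i) //=.
congr (_ + _).
  rewrite -!mulr_sumr.
  rewrite (eq_bigr (fun B => wB B * (if i \in B then (T #|B| ^+ 2)^-1 else 0))); last first.
    by move=> B _; rewrite andbb.
  by rewrite (sum_wB_1 i (fun m => (T m ^+ 2)^-1)) -/A1; ring.
apply: eq_bigr => l li.
rewrite -!mulr_sumr (sum_wB_2 (fun m => (T m ^+ 2)^-1)); last by rewrite eq_sym.
by rewrite -/B2; ring.
Qed.

Lemma E_j : expect k (fun S => (xhat k T x S j - xbar x j) ^+ 2) =
  (n%:R ^+ 2)^-1 * ((beta ^+ 2 * A1 - 1) * P1 + (beta ^+ 2 * B2 - 1) * P2).
Proof.
transitivity (expect k (fun S => (G (Bset S j) - xbar x j) ^+ 2)).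
  by rewrite /expect; apply: eq_bigr => S _; rewrite xhatE.
rewrite (expect_pattern j (fun B => (G B - xbar x j) ^+ 2)).
set xb := xbar x j.
transitivity (\sum_(B : {set 'I_n}) wB B * G B ^+ 2 - 2 * xb * \sum_(B : {set 'I_n}) wB B * G B
   + xb ^+ 2 * \sum_(B : {set 'I_n}) wB B).
  rewrite [2 * xb * _]mulr_sumr [xb ^+ 2 * _]mulr_sumr -sumrB -big_split /=.
  by apply: eq_bigr => B _; ring.
rewrite M1 M2 sum_wB.
have hx : xb ^+ 2 = (n%:R ^+ 2)^-1 * (P1 + P2).
  by rewrite /xb /xbar exprMn exprVn sq_sum2.
transitivity ((n%:R ^+ 2)^-1 * beta ^+ 2 * (A1 * P1 + B2 * P2) - xb ^+ 2); first by rewrite -/xb; ring.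
rewrite hx. generalize P1 P2 => a b. ring.
Qed.
End PerJ.

Lemma main_thm : expect k (sqerr k T x) =
    n%:R ^- 2 * (d%:R / k%:R - 1) * R1 x
    + n%:R ^- 2 * (c1 n d k T * R1 x - c2 n d k T * R2 x).
Proof.
transitivity (\sum_(j < d) expect k (fun S => (xhat k T x S j - xbar x j) ^+ 2)).
  rewrite /expect /sqerr; under eq_bigr do rewrite mulr_sumr.
  by rewrite exchange_big.
under eq_bigr do rewrite E_j.
rewrite c1E c2E.
have e1 : R1 x = \sum_(j < d) \sum_(i < n) x i j * x i j.
  by rewrite /R1 /dotp exchange_big.
have e2 : R2 x = \sum_(j < d) \sum_(i < n) \sum_(l < n | l != i) x i j * x l j.
  rewrite /R2 -(@pair_sum (fun i l => dotp (x i) (x l))); last first.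
    by move=> i l; rewrite /dotp; apply: eq_bigr => j _; rewrite mulrC.
  rewrite [RHS]exchange_big; apply: eq_bigr => i _.
  by rewrite [RHS]exchange_big.
rewrite e1 e2.
under eq_bigr do rewrite mulrDr.
rewrite big_split /= -!mulr_sumr.
ring.
Qed.
End Main.

Unset Implicit Arguments.
Set Strict Implicit.

Theorem theorem1 (R : realFieldType) (n d k : nat)
    (x : 'I_n -> 'I_d -> R) (T : nat -> R)
    (hn : (1 <= n)%N) (hk : (1 <= k)%N) (hkd : (k <= d)%N)
    (hT : forall m : nat, (1 <= m <= n)%N -> T m != 0)
    (hbeta : \sum_(1 <= m < n.+1)
        k%:R / (d%:R * T m) * 'C(n.-1, m.-1)%:R
          * (pk R d k) ^+ m.-1 * (1 - pk R d k) ^+ (n - m) != 0) :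
  @expect R n d k (@sqerr R n d k T x)
  = n%:R ^- 2 * (d%:R / k%:R - 1) * @R1 R n d x
    + n%:R ^- 2 * (@c1 R n d k T * @R1 R n d x - @c2 R n d k T * @R2 R n d x).
Proof. exact: main_thm. Qed.
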